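(* Let $(R,\mathfrak{m},k)$ be a commutative Noetherian local ring and let $(\mathbf{F},\partial)$ be a minimal Tate resolution of $k$ over $R$. Then the linear part $\operatorname{lin}^R(\mathbf{F})$ has a structure of (graded commutative) DG algebra over $R^{\mathsf g}$ induced by that of $\mathbf{F}$: for $x\in\mathfrak{m}^iF_n$ and $y\in\mathfrak{m}^jF_m$ with classes $x^*\in\mathfrak{m}^iF_n/\mathfrak{m}^{i+1}F_n$ and $y^*\in\mathfrak{m}^jF_m/\mathfrak{m}^{j+1}F_m$, the product $x^*y^*$ is the class of $xy$ in $\mathfrak{m}^{i+j}F_{n+m}/\mathfrak{m}^{i+j+1}F_{n+m}$.
   Context: A (graded commutative) DG algebra over a commutative ring $S$ is a non-negative $S$-complex $(\mathbf{D},\partial)$ with a morphism of complexes $\mathbf{D}\otimes_S\mathbf{D}\to\mathbf{D}$, $a\otimes b\mapsto ab$, which is unital, associative, and graded commutative ($ab=(-1)^{|a||b|}ba$, and $a^2=0$ when $|a|$ is odd); being a morphism of complexes amounts to the Leibniz rule $\partial(ab)=\partial(a)b+(-1)^{|a|}a\partial(b)$. A minimal Tate resolution of $k$ is a minimal free resolution $\mathbf{F}$ of $k$ over $R$ (finitely generated free modules, $\partial(F_i)\subseteq\mathfrak{m}F_{i-1}$) carrying a DG algebra structure over $R$. $R^{\mathsf g}=\bigoplus_{i\ge0}\mathfrak{m}^i/\mathfrak{m}^{i+1}$. The linear part $\operatorname{lin}^R(\mathbf{F})$ is the associated graded complex of the filtration $(\mathfrak{F}^p\mathbf{F})_i=\mathfrak{m}^{p-i}F_i$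 ($\mathfrak{m}^j=R$ for $j\le0$); it is a complex of graded free $R^{\mathsf g}$-modules with $\operatorname{lin}^R_n(\mathbf{F})=F_n^{\mathsf g}(-n)$, $F_n^{\mathsf g}=\bigoplus_{i\ge0}\mathfrak{m}^iF_n/\mathfrak{m}^{i+1}F_n$, and differential sending the class of $x\in\mathfrak{m}^iF_n$ to the class of $\partial(x)$ in $\mathfrak{m}^{i+1}F_{n-1}/\mathfrak{m}^{i+2}F_{n-1}$. *)

(* Defs.v *)
From HB Require Import structures.
From mathcomp Require Import all_boot all_order all_algebra.
Set Implicit Arguments. Unset Strict Implicit. Unset Printing Implicit Defensive.
Import Order.TTheory GRing.Theory Num.Theory.
Local Open Scope ring_scope.

Section Ring.
Variable R : comNzRingType.

Definition is_ideal (I : R -> Prop) : Prop :=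
  [/\ I 0, (forall x y, I x -> I y -> I (x + y)) & (forall a x, I x -> I (a * x))].

Definition fin_gen (I : R -> Prop) : Prop :=
  exists s : seq R, forall x,
    I x <-> exists c : 'I_(size s) -> R, x = \sum_(k < size s) c k * s`_k.

Definition noetherian : Prop := forall I, is_ideal I -> fin_gen I.

Definition local_max (m : R -> Prop) : Prop :=
  [/\ is_ideal m, ~ m 1 & forall x, ~ m x -> exists y, x * y = 1].

Fixpoint mpow (m : R -> Prop) (i : nat) : R -> Prop :=
  match i with
  | 0 => fun _ => True
  | i'.+1 => fun x => exists s : seq (R * R),
      (forall q, q \in s -> m q.1 /\ mpow m i' q.2) /\
      x = \sum_(q <- s) q.1 * q.2
  end.

Definition filtM (m : R -> Prop) (i : nat) (V : lmodType R) (v : V) : Prop :=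
  exists s : seq (R * V), (forall q, q \in s -> mpow m i q.1) /\
    v = \sum_(q <- s) q.1 *: q.2.

Definition free_fg (V : lmodType R) : Prop :=
  exists r (b : 'I_r -> V), forall v : V,
    exists! c : {ffun 'I_r -> R}, v = \sum_(k < r) c k *: b k.

(* class of x in m^i V / m^(i+1) V, as a subset of V (the coset
   x + m^(i+1)V inside m^iV; empty if x is not in m^iV) *)
Definition cls (m : R -> Prop) (V : lmodType R) (i : nat) (x : V) : V -> Prop :=
  fun z => filtM m i z /\ filtM m i.+1 (z - x).

(* class of r in m^k / m^(k+1), i.e. a homogeneous element of R^g *)
Definition clsR (m : R -> Prop) (k : nat) (r : R) : R -> Prop :=
  fun z => mpow m k z /\ mpow m k.+1 (z - r).

Definition addC (V : lmodType R) (P Q : V -> Prop) : V -> Prop :=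
  fun z => exists x y, [/\ P x, Q y & z = x + y].

Definition signC (V : lmodType R) (e : nat) (P : V -> Prop) : V -> Prop :=
  if odd e then (fun z => P (- z)) else P.

Definition actL (m : R -> Prop) (V : lmodType R) (k i : nat)
    (A : R -> Prop) (P : V -> Prop) : V -> Prop :=
  fun z => filtM m (k + i) z /\
    exists r x, [/\ A r, P x & filtM m (k + i).+1 (z - r *: x)].

End Ring.

Section Complex.
Variable R : comNzRingType.
Variable m : R -> Prop.
Variable F : nat -> lmodType R.
Variable d : forall n, {linear F n.+1 -> F n}.
Variable mul : forall n p, F n -> F p -> F (n + p).
Variable one : F 0.

Definition castF n p (e : n = p) (x : F n) : F p := eq_rect n F x p e.
Definition castP n p (e : n = p) (P : F n -> Prop) : F p -> Prop :=
  eq_rect n (fun k => F k -> Prop) P p e.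

Definition is_complex : Prop := forall n (x : F n.+2), d n (d n.+1 x) = 0.

(* resolution of k = R/m: exact in positive degrees, and H_0(F) = F_0/im d_0
   is isomorphic to R/m via an augmentation eps : F_0 -> R *)
Definition resolves_residue_field : Prop :=
  (forall n (x : F n.+1), d n x = 0 -> exists y, x = d n.+1 y) /\
  exists eps : {linear F 0 -> R^o},
    (exists x, eps x = 1) /\ (forall x, m (eps x) <-> exists y, x = d 0 y).

Definition minimal_free : Prop :=
  (forall n, free_fg (F n)) /\ (forall n (x : F n.+1), filtM m 1 (d n x)).

Definition is_DG_algebra : Prop :=
  [/\ (forall n p (a : R) (x x' : F n) (y : F p),
          mul (a *: x + x') y = a *: mul x y + mul x' y),
      (forall n p (a : R) (x : F n) (y y' : F p),
          mul x (a *: y + y') = a *: mul x y + mul x y'),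
      (forall n (x : F n), castF (add0n n) (mul one x) = x),
      (forall n p q (x : F n) (y : F p) (z : F q),
          castF (addnA n p q) (mul x (mul y z)) = mul (mul x y) z) &
   [/\ (forall n p (x : F n) (y : F p),
          mul x y = castF (addnC p n) ((-1) ^+ (n * p) *: mul y x)),
      (forall n (x : F n), odd n -> mul x x = 0) &
      [/\ (forall n p (x : F n.+1) (y : F p.+1),
             d (n + p.+1) (mul x y) =
             mul (d n x) y + (-1) ^+ n.+1 *: castF (esym (addnS n p)) (mul x (d p y))),
          (forall p (x : F 0) (y : F p.+1), d p (mul x y) = mul x (d p y)) &
          (forall n (x : F n.+1) (y : F 0), d (n + 0) (mul x y) = mul (d n x) y)]]].

(* The linear part lin(F).  Its homogeneous pieces are m^iF_n/m^(i+1)F_n     *)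
(* (internal degree i+n, homological degree n); classes are represented as   *)

Definition dL (i n : nat) (P : F n.+1 -> Prop) : F n -> Prop :=
  fun z => filtM m i.+1 z /\ exists x, P x /\ filtM m i.+2 (z - d n x).

Definition mulL (i j : nat) n p (P : F n -> Prop) (Q : F p -> Prop) :
    F (n + p) -> Prop :=
  fun z => filtM m (i + j) z /\
    exists x y, [/\ P x, Q y & filtM m (i + j).+1 (z - mul x y)].

Local Notation filt := (filtM m).
Local Notation cl := (cls m).

(* All statements
   are on homogeneous classes (bidegree (i,n)), which determine the
   structure on the direct sums lin_n = (+)_i m^iF_n/m^(i+1)F_n. *)
Definition lin_is_DG_algebra : Prop :=
  [/\
      (forall i j n p (x : F n) (y : F p), filt i x -> filt j y ->
         filt (i + j) (mul x y) /\
         mulL i j (cl i x) (cl j y) = cl (i + j) (mul x y)),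
      (forall i j n p (x x' : F n) (y : F p), filt i x -> filt i x' -> filt j y ->
         mulL i j (addC (cl i x) (cl i x')) (cl j y) =
         addC (mulL i j (cl i x) (cl j y)) (mulL i j (cl i x') (cl j y))) /\
      (forall i j n p (x : F n) (y y' : F p), filt i x -> filt j y -> filt j y' ->
         mulL i j (cl i x) (addC (cl j y) (cl j y')) =
         addC (mulL i j (cl i x) (cl j y)) (mulL i j (cl i x) (cl j y'))),
      (forall k i j n p (r : R) (x : F n) (y : F p),
         mpow m k r -> filt i x -> filt j y ->
         mulL (k + i) j (actL m k i (clsR m k r) (cl i x)) (cl j y) =
         actL m k (i + j) (clsR m k r) (mulL i j (cl i x) (cl j y)) /\
         mulL i (k + j) (cl i x) (actL m k j (clsR m k r) (cl j y)) =
         actL m k (i + j) (clsR m k r) (mulL i j (cl i x) (cl j y))),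
      (forall i n (x : F n), filt i x ->
         castP (add0n n) (mulL 0 i (cl 0 one) (cl i x)) = cl i x) &
   [/\
      (forall i j k n p q (x : F n) (y : F p) (z : F q),
         filt i x -> filt j y -> filt k z ->
         castP (addnA n p q) (mulL i (j + k) (cl i x) (mulL j k (cl j y) (cl k z)))
         = mulL (i + j) k (mulL i j (cl i x) (cl j y)) (cl k z)) &
      [/\
          (forall i j n p (x : F n) (y : F p), filt i x -> filt j y ->
             mulL i j (cl i x) (cl j y) =
             castP (addnC p n) (signC (n * p) (mulL j i (cl j y) (cl i x)))),
          (forall i n (x : F n), odd n -> filt i x ->
             mulL i i (cl i x) (cl i x) = cl (i + i) (0 : F (n + n))) &
          [/\ (forall i j n p (x : F n.+1) (y : F p.+1), filt i x -> filt j y ->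
                 dL (i + j) (mulL i j (cl i x) (cl j y)) =
                 addC (mulL i.+1 j (dL i (cl i x)) (cl j y))
                      (signC n.+1 (castP (esym (addnS n p))
                                   (mulL i j.+1 (cl i x) (dL j (cl j y)))))),
              (forall i j p (x : F 0) (y : F p.+1), filt i x -> filt j y ->
                 dL (i + j) (mulL i j (cl i x) (cl j y)) =
                 mulL i j.+1 (cl i x) (dL j (cl j y))) &
              (forall i j n (x : F n.+1) (y : F 0), filt i x -> filt j y ->
                 dL (i + j) (mulL i j (cl i x) (cl j y)) =
                 mulL i.+1 j (dL i (cl i x)) (cl j y))]]]].

End Complex.

(* Main.v *)
Require Import Defs.
From HB Require Import structures.
From mathcomp Require Import all_boot all_order all_algebra.
From Stdlib Require Import FunctionalExtensionality PropExtensionality.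
Set Implicit Arguments. Unset Strict Implicit. Unset Printing Implicit Defensive.
Import GRing.Theory.
Local Open Scope ring_scope.

Section Filt.
Variable R : comNzRingType.
Variable m : R -> Prop.
Hypothesis hm : is_ideal m.

Lemma mpow0 k : mpow m k 0.
Proof. case: k => //= k; exists [::]; split => //; by rewrite big_nil. Qed.

Lemma mpowD k x y : mpow m k x -> mpow m k y -> mpow m k (x + y).
Proof.
case: k => //= k [s [Hs ->]] [t [Ht ->]]; exists (s ++ t); split.
  by move=> q; rewrite mem_cat => /orP [] ?; [apply: Hs|apply: Ht].
by rewrite big_cat.
Qed.

Lemma mpowM k a x : mpow m k x -> mpow m k (a * x).
Proof.
case: hm => _ _ hI.
case: k => //= k [s [Hs ->]]; exists [seq (a * q.1, q.2) | q <- s]; split.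
  move=> q /mapP [q' Hq' ->] /=; have [H1 H2] := Hs _ Hq'; split => //; exact: hI.
by rewrite big_map mulr_sumr; apply: eq_bigr => q _; rewrite mulrA.
Qed.

Lemma mpow_mul i j a b : mpow m i a -> mpow m j b -> mpow m (i + j) (a * b).
Proof.
elim: i a => [|i IH] a /=; first by move=> _ hb; rewrite add0n; exact: mpowM.
move=> [s [Hs ->]] hb; exists [seq (q.1, q.2 * b) | q <- s]; split.
  move=> q /mapP [q' Hq' ->] /=; have [H1 H2] := Hs _ Hq'; split => //; exact: IH.
by rewrite big_map mulr_suml; apply: eq_bigr => q _; rewrite mulrA.
Qed.

Variable V : lmodType R.

Lemma filt0 i : filtM m i (0 : V).
Proof. exists [::]; split => //; by rewrite big_nil. Qed.

Lemma filtD i (x y : V) : filtM m i x -> filtM m i y -> filtM m i (x + y).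
Proof.
move=> [s [Hs ->]] [t [Ht ->]]; exists (s ++ t); split.
  by move=> q; rewrite mem_cat => /orP [] ?; [apply: Hs|apply: Ht].
by rewrite big_cat.
Qed.

Lemma filtZ i a (x : V) : filtM m i x -> filtM m i (a *: x).
Proof.
move=> [s [Hs ->]]; exists [seq (q.1, a *: q.2) | q <- s]; split.
  by move=> q /mapP [q' Hq' ->] /=; apply: Hs.
rewrite big_map scaler_sumr; apply: eq_bigr => q _; by rewrite !scalerA mulrC.
Qed.

Lemma filtN i (x : V) : filtM m i x -> filtM m i (- x).
Proof. move=> h; rewrite -scaleN1r; exact: filtZ. Qed.

Lemma filtB i (x y : V) : filtM m i x -> filtM m i y -> filtM m i (x - y).
Proof. by move=> hx hy; apply: filtD => //; apply: filtN. Qed.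

Lemma filt_0 (x : V) : filtM m 0 x.
Proof. exists [:: (1, x)]; split => //; by rewrite big_seq1 scale1r. Qed.

Lemma filt_sum i (I : eqType) (s : seq I) (f : I -> V) :
  (forall q, q \in s -> filtM m i (f q)) -> filtM m i (\sum_(q <- s) f q).
Proof.
elim: s => [|q s IH] h; first by rewrite big_nil; exact: filt0.
rewrite big_cons; apply: filtD; first by apply: h; rewrite mem_head.
by apply: IH => q' hq'; apply: h; rewrite in_cons hq' orbT.
Qed.

Lemma filt_scale k i r (x : V) : mpow m k r -> filtM m i x -> filtM m (k + i) (r *: x).
Proof.
move=> hr [s [Hs ->]]; exists [seq (r * q.1, q.2) | q <- s]; split.
  move=> q /mapP [q' Hq' ->] /=; exact: mpow_mul (Hs _ Hq').
rewrite big_map scaler_sumr; apply: eq_bigr => q _; by rewrite scalerA.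
Qed.

End Filt.

Lemma filt_map (R : comNzRingType) (m : R -> Prop) (hm : is_ideal m) (V W : lmodType R) (g : V -> W) i j v :
  (forall a u w, g (a *: u + w) = a *: g u + g w) ->
  (forall u, filtM m j (g u)) -> filtM m i v -> filtM m (i + j) (g v).
Proof.
move=> hg hj [s [Hs ->]].
have g0 : g 0 = 0.
  have := hg 1 0 0; rewrite !scale1r addr0 => /(congr1 (fun x => x - g 0)).
  by rewrite addrK subrr => <-.
have -> : g (\sum_(q <- s) q.1 *: q.2) = \sum_(q <- s) q.1 *: g q.2.
  elim: s {Hs} => [|q s IH]; first by rewrite !big_nil.
  by rewrite !big_cons hg IH.
apply: filt_sum => q hq.
move: (Hs _ hq) => h1. have := @filt_scale R m hm W i j q.1 (g q.2) h1 (hj _). exact.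
Qed.

Section Lin.
Variable R : comNzRingType.
Variables V W : lmodType R.
Variable g : V -> W.
Hypothesis hg : forall a u w, g (a *: u + w) = a *: g u + g w.

Lemma g0 : g 0 = 0.
Proof.
have := hg 1 0 0; rewrite !scale1r addr0 => /(congr1 (fun x => x - g 0)).
by rewrite addrK subrr => <-.
Qed.
Lemma gZ a u : g (a *: u) = a *: g u.
Proof. by have := hg a u 0; rewrite !addr0 g0 addr0. Qed.
Lemma gD u w : g (u + w) = g u + g w.
Proof. by have := hg 1 u w; rewrite !scale1r. Qed.
Lemma gN u : g (- u) = - g u.
Proof. by rewrite -scaleN1r gZ scaleN1r. Qed.
Lemma gB u w : g (u - w) = g u - g w.
Proof. by rewrite gD gN. Qed.
End Lin.

Section Cls.
Variable R : comNzRingType.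
Variable m : R -> Prop.
Hypothesis hm : is_ideal m.

Lemma predext (T : Type) (P Q : T -> Prop) : (forall z, P z <-> Q z) -> P = Q.
Proof. move=> h; apply: functional_extensionality => z; apply: propositional_extensionality; exact: h. Qed.

Lemma cl_in (V : lmodType R) i (x : V) : filtM m i x -> cls m i x x.
Proof. by move=> hx; split => //; rewrite subrr; exact: filt0. Qed.

Lemma L_addC (V : lmodType R) i (x x' : V) : filtM m i x' ->
  Defs.addC (cls m i x) (cls m i x') = cls m i (x + x').
Proof.
move=> hx'; apply: predext => z; split.
  move=> [a [b [[fa ha] [fb hb] ->]]]; split; first exact: filtD.
  by rewrite opprD addrACA; apply: filtD.
move=> [fz hz]; exists (z - x'), x'; split => //; last by rewrite subrK.
  split; first exact: filtB.
  by rewrite -addrA -opprD (addrC x').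
exact: cl_in.
Qed.

Lemma L_signC (V : lmodType R) e i (v : V) :
  signC e (cls m i v) = cls m i ((-1) ^+ e *: v).
Proof.
rewrite /signC -signr_odd; case: ifP => ho; last by rewrite expr0 scale1r.
rewrite expr1 scaleN1r; apply: predext => z; split.
  move=> [h1 h2]; split; first by rewrite -(opprK z); apply: filtN.
  by rewrite -(opprK (z - - v)) opprD opprK; apply: filtN.
move=> [h1 h2]; split; first exact: filtN.
have -> : - z - v = - (z - - v) by rewrite opprK opprD.
exact: filtN.
Qed.

Lemma castP_cl (F : nat -> lmodType R) n p (e : n = p) i (v : F n) :
  castP e (cls m i v) = cls m i (castF e v).
Proof. by case: p / e. Qed.

Lemma castF_filt (F : nat -> lmodType R) n p (e : n = p) i (v : F n) :
  filtM m i v -> filtM m i (castF e v).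
Proof. by case: p / e. Qed.

Lemma L_act (V : lmodType R) k i r (x : V) : mpow m k r -> filtM m i x ->
  actL m k i (clsR m k r) (cls m i x) = cls m (k + i) (r *: x).
Proof.
move=> hr hx; apply: predext => z; split.
  move=> [fz [r1 [x1 [[hr1 hr1'] [fx1 hx1] hz]]]]; split => //.
  have -> : z - r *: x = (z - r1 *: x1) + ((r1 - r) *: x1 + r *: (x1 - x)).
    by rewrite scalerBl scalerBr !addrA !subrK.
  apply: filtD => //; apply: filtD.
    by have := filt_scale hm hr1' fx1; rewrite addSn.
  by have := filt_scale hm hr hx1; rewrite addnS.
move=> [fz hz]; split => //; exists r, x; split => //; last exact: cl_in.
by split => //; rewrite subrr; exact: mpow0.
Qed.

End Cls.

Section Cx.
Variable R : comNzRingType.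
Variable m : R -> Prop.
Hypothesis hm : is_ideal m.
Variable F : nat -> lmodType R.
Variable d : forall n, {linear F n.+1 -> F n}.
Hypothesis hd : forall n (x : F n.+1), filtM m 1 (d n x).
Variable mul : forall n p, F n -> F p -> F (n + p).
Hypothesis hL : forall n p (a : R) (x x' : F n) (y : F p),
          mul (a *: x + x') y = a *: mul x y + mul x' y.
Hypothesis hR : forall n p (a : R) (x : F n) (y y' : F p),
          mul x (a *: y + y') = a *: mul x y + mul x y'.

Lemma filt_d i n (x : F n.+1) : filtM m i x -> filtM m i.+1 (d n x).
Proof.
move=> hx; rewrite -addn1; apply: (filt_map hm) hx => //.
by move=> a u w; rewrite linearP.
Qed.

Lemma filt_mul i j n p (x : F n) (y : F p) :
  filtM m i x -> filtM m j y -> filtM m (i + j) (mul x y).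
Proof.
move=> hx hy.
have h1 : forall u : F n, filtM m j (mul u y).
  move=> u; rewrite -(addn0 j).
  apply: (@filt_map R m hm (F p) (F (n+p)) (mul u) j 0 y) => //.
  all: try (by move=> a v w; rewrite hR); try (by move=> v; exact: (filt_0 m _)).
apply: (@filt_map R m hm (F n) (F (n+p)) (fun x => mul x y) i j x) => //.
all: try (by move=> a v w; rewrite hL).
Qed.

Lemma L_mulL i j n p (x : F n) (y : F p) :
  filtM m i x -> filtM m j y ->
  mulL m mul i j (cls m i x) (cls m j y) = cls m (i + j) (mul x y).
Proof.
move=> hx hy; apply: predext => z; split.
  move=> [fz [x1 [y1 [[fx1 hx1] [fy1 hy1] hz]]]]; split => //.
  have -> : z - mul x y = (z - mul x1 y1) + (mul (x1 - x) y1 + mul x (y1 - y)).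
    rewrite (gB (g := fun u => mul u y1)); last by move=> *; rewrite hL.
    rewrite (gB (g := mul x)); last by move=> *; rewrite hR.
    by rewrite !addrA !subrK.
  apply: filtD => //; apply: filtD.
    by have := filt_mul hx1 fy1; rewrite addSn.
  by have := filt_mul hx hy1; rewrite addnS.
move=> [fz hz]; split => //; exists x, y; split => //; exact: cl_in.
Qed.

Lemma L_dL i n (x : F n.+1) : filtM m i x ->
  dL m d i (cls m i x) = cls m i.+1 (d n x).
Proof.
move=> hx; apply: predext => z; split.
  move=> [fz [x1 [[fx1 hx1] hz]]]; split => //.
  have -> : z - d n x = (z - d n x1) + d n (x1 - x).
    by rewrite linearB addrA subrK.
  by apply: filtD => //; apply: filt_d.
move=> [fz hz]; split => //; exists x; split => //; exact: cl_in.
Qed.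

End Cx.

Theorem lemma2p4 (R : comNzRingType) (m : R -> Prop)
    (F : nat -> lmodType R) (d : forall n, {linear F n.+1 -> F n})
    (mul : forall n p, F n -> F p -> F (n + p)) (one : F 0) :
  noetherian R -> local_max m ->
  is_complex d -> resolves_residue_field m d -> minimal_free m d ->
  is_DG_algebra d mul one ->
  lin_is_DG_algebra m d mul one.
Proof.
move=> _ [hm _ _] _ _ [_ hd] [hL hR hU hA [hC hSq [hD1 hD2 hD3]]].
have Mu := L_mulL hm hL hR; have Fm := filt_mul hm hL hR.
have Dl := L_dL hm hd; have Fd := filt_d hm hd; have Ac := L_act hm.
have mZl : forall n p a (x : F n) (y : F p), mul _ _ (a *: x) y = a *: mul _ _ x y.
  by move=> n p a x y; apply: (gZ (g := fun x => mul n p x y)) => *; rewrite hL.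
have mZr : forall n p a (x : F n) (y : F p), mul _ _ x (a *: y) = a *: mul _ _ x y.
  by move=> n p a x y; apply: (gZ (g := mul n p x)) => *; rewrite hR.
have mDl : forall n p (x x' : F n) (y : F p), mul _ _ (x + x') y = mul _ _ x y + mul _ _ x' y.
  by move=> n p x x' y; apply: (gD (g := fun x => mul n p x y)) => *; rewrite hL.
have mDr : forall n p (x : F n) (y y' : F p), mul _ _ x (y + y') = mul _ _ x y + mul _ _ x y'.
  by move=> n p x y y'; apply: (gD (g := mul n p x)) => *; rewrite hR.
split.
- by move=> i j n p x y hx hy; split; [exact: Fm | exact: Mu].
- split.
  + move=> i j n p x x' y hx hx' hy.
    rewrite (L_addC x hx') (Mu _ _ _ _ _ _ (filtD hx hx') hy) (Mu _ _ _ _ _ _ hx hy).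
    by rewrite (Mu _ _ _ _ _ _ hx' hy) (L_addC _ (Fm _ _ _ _ _ _ hx' hy)) mDl.
  + move=> i j n p x y y' hx hy hy'.
    rewrite (L_addC y hy') (Mu _ _ _ _ _ _ hx (filtD hy hy')) (Mu _ _ _ _ _ _ hx hy).
    by rewrite (Mu _ _ _ _ _ _ hx hy') (L_addC _ (Fm _ _ _ _ _ _ hx hy')) mDr.
- move=> k i j n p r x y hr hx hy; split.
  + rewrite (Ac _ _ _ _ _ hr hx) (Mu _ _ _ _ _ _ (filt_scale hm hr hx) hy).
    by rewrite (Mu _ _ _ _ _ _ hx hy) (Ac _ _ _ _ _ hr (Fm _ _ _ _ _ _ hx hy)) mZl addnA.
  + rewrite (Ac _ _ _ _ _ hr hy) (Mu _ _ _ _ _ _ hx (filt_scale hm hr hy)).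
    by rewrite (Mu _ _ _ _ _ _ hx hy) (Ac _ _ _ _ _ hr (Fm _ _ _ _ _ _ hx hy)) mZr addnCA.
- move=> i n x hx.
  by rewrite (Mu _ _ _ _ _ _ (filt_0 m one) hx) castP_cl hU.
- split.
  + move=> i j k n p q x y z hx hy hz.
    rewrite (Mu _ _ _ _ _ _ hy hz) (Mu _ _ _ _ _ _ hx (Fm _ _ _ _ _ _ hy hz)) castP_cl hA.
    by rewrite (Mu _ _ _ _ _ _ hx hy) (Mu _ _ _ _ _ _ (Fm _ _ _ _ _ _ hx hy) hz) addnA.
  split.
  + move=> i j n p x y hx hy.
    by rewrite (Mu _ _ _ _ _ _ hx hy) (Mu _ _ _ _ _ _ hy hx) L_signC castP_cl -hC (addnC j i).
  + move=> i n x ho hx.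
    by rewrite (Mu _ _ _ _ _ _ hx hx) hSq.
  split.
  + move=> i j n p x y hx hy.
    rewrite (Mu _ _ _ _ _ _ hx hy) (Dl _ _ _ (Fm _ _ _ _ _ _ hx hy)).
    rewrite (Dl _ _ _ hx) (Dl _ _ _ hy) (Mu _ _ _ _ _ _ (Fd _ _ _ hx) hy).
    rewrite (Mu _ _ _ _ _ _ hx (Fd _ _ _ hy)) castP_cl L_signC (addnS i j).
    rewrite L_addC ?hD1 //.
    apply: filtZ; apply: castF_filt.
    by have := Fm _ _ _ _ _ _ hx (Fd _ _ _ hy); rewrite (addnS i j).
  + move=> i j p x y hx hy.
    rewrite (Mu _ _ _ _ _ _ hx hy) (Dl _ _ _ (Fm _ _ _ _ _ _ hx hy)).
    by rewrite (Dl _ _ _ hy) (Mu _ _ _ _ _ _ hx (Fd _ _ _ hy)) hD2 (addnS i j).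
  + move=> i j n x y hx hy.
    rewrite (Mu _ _ _ _ _ _ hx hy) (Dl _ _ _ (Fm _ _ _ _ _ _ hx hy)).
    by rewrite (Dl _ _ _ hx) (Mu _ _ _ _ _ _ (Fd _ _ _ hx) hy) hD3.
Qed.
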